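(* Let $\mathcal M$ be a finite polyptych lattice over $F$ and $\mathcal P\subseteq\mathcal M_{\mathbb R}$ a PL polytope over $F$. Then $\mathcal P=\mathrm{p\text{-}conv}_{\mathbb R}(V(\mathcal P))$.
   Context: Fix a subring $F$ with $\mathbb Z\subseteq F\subseteq\mathbb R$. A polyptych lattice of rank $r$ over $F$ is a collection $\{M_\alpha\}_{\alpha\in I}$ of free $F$-modules of rank $r$ with piecewise $F$-linear maps (continuous and $F$-linear on each cone of some complete $F$-rational fan) $\mu_{\alpha,\beta}:M_\alpha\to M_\beta$ with $\mu_{\alpha,\alpha}=\mathrm{id}$, $\mu_{\alpha,\beta}=\mu_{\beta,\alpha}^{-1}$, $\mu_{\beta,\gamma}\circ\mu_{\alpha,\beta}=\mu_{\alpha,\gamma}$; finite if $I$ is finite. Elements are classes of $\bigsqcup M_\alpha$ under $m_\alpha\sim\mu_{\alpha,\beta}(m_\alpha)$; $\pi_\alpha$ chart maps; $\mathcal M_{\mathbb R}$ has charts $M_\alpha\otimes\mathbb R$, with the topology induced from these charts. $m+_\alpha m':=\pi_\alpha^{-1}(\pi_\alpha(m)+\pi_\alpha(m'))$, $\lambda m:=\pi_\alpha^{-1}(\lambda\pi_\alpha(m))$ ($\lambda\ge 0$). A point of $\mathcal M$ (resp. $\mathcal M_{\mathbb R}$) is $p$ with values in $F$ (resp. $\mathbb R$) such that $p(m)+p(m')=\min_\alpha p(m+_\alpha m')$ and $p(\lambda m)=\lambda p(m)$ for $\lambda\ge0$ in $F$ (resp. $\mathbb R$); sets $\mathrm{Sp}(\mathcal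 M)$, $\mathrm{Sp}_{\mathbb R}(\mathcal M)$; points of $\mathcal M$ extend continuously to $\mathcal M_{\mathbb R}$. For a point $p$ and $a$, $\mathcal H_{p,a}=\{m\in\mathcal M_{\mathbb R}:p(m)\ge a\}$. $\mathrm{p\text{-}conv}_{\mathbb R}(S)$ is the intersection of all $\mathcal H_{p,a}$ with $p\in\mathrm{Sp}_{\mathbb R}(\mathcal M)$, $a\in\mathbb R$, containing $S$. A PL polytope over $F$ is a compact set of the form $\bigcap_{i=1}^\ell\mathcal H_{p_i,a_i}$ with $p_i\in\mathrm{Sp}(\mathcal M)$, $a_i\in F$; each chart image $\pi_\alpha(\mathcal P)$ is then a classical polytope. Its vertex set is $V(\mathcal P)=\{m\in\mathcal M_{\mathbb R}:\exists\alpha,\ \pi_\alpha(m)\text{ is a vertex of }\pi_\alpha(\mathcal P)\}$. *)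

(* Defs.v *)
From HB Require Import structures.
From mathcomp Require Import all_boot all_order all_algebra.
From mathcomp Require Import all_classical all_reals all_analysis.
Set Implicit Arguments. Unset Strict Implicit. Unset Printing Implicit Defensive.
Import Order.TTheory GRing.Theory Num.Theory.
Import numFieldNormedType.Exports.
Local Open Scope classical_set_scope.
Local Open Scope ring_scope.

Section PolyptychDefs.
Variables (R : realType) (r : nat).

(** F is a subring of R with Z ⊆ F ⊆ R (Z ⊆ F follows from 1 ∈ F and closure). *)
Definition is_subring (F : {pred R}) : Prop :=
  1 \in F /\ (forall x y, x \in F -> y \in F -> (x - y \in F) /\ (x * y \in F)).

(** M_α ⊗ R is modelled as 'rV[R]_r, and M_α = F^r ⊆ R^r (its F-points). *)
Definition Fpoint (F : {pred R}) (v : 'rV[R]_r) : Prop := forall j, v 0 j \in F.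

Definition dotv (u v : 'rV[R]_r) : R := \sum_j u 0 j * v 0 j.

Definition cone (gens : seq 'rV[R]_r) : set 'rV[R]_r :=
  [set x | exists lam : 'I_(size gens) -> R,
     (forall i, 0 <= lam i) /\ x = \sum_(i < size gens) lam i *: gens`_i].

Definition Frational_cone (F : {pred R}) (gens : seq 'rV[R]_r) : Prop :=
  forall i, (i < size gens)%N -> Fpoint F gens`_i.

Definition is_face (C D : set 'rV[R]_r) : Prop :=
  exists u : 'rV[R]_r, (forall y, C y -> 0 <= dotv u y) /\
    D = C `&` [set x | dotv u x = 0].

Definition strongly_convex (C : set 'rV[R]_r) : Prop :=
  forall x, C x -> C (- x) -> x = 0.

Definition complete_Frational_fan (F : {pred R}) (Sig : seq (seq 'rV[R]_r)) : Prop :=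
  [/\ forall g, g \in Sig -> Frational_cone F g /\ strongly_convex (cone g),
      forall g D, g \in Sig -> is_face (cone g) D ->
        exists2 g', g' \in Sig & cone g' = D,
      forall g g', g \in Sig -> g' \in Sig ->
        is_face (cone g) (cone g `&` cone g') /\ is_face (cone g') (cone g `&` cone g')
    & forall x, exists2 g, g \in Sig & cone g x].

(** Piecewise F-linear map (its extension to M_α ⊗ R): continuous, and on each
    cone of some complete F-rational fan given by a matrix with entries in F. *)
Definition piecewise_Flinear (F : {pred R}) (f : 'rV[R]_r -> 'rV[R]_r) : Prop :=
  continuous f /\
  exists Sig, complete_Frational_fan F Sig /\
    forall g, g \in Sig -> exists A : 'M[R]_r,
      (forall i j, A i j \in F) /\ forall x, cone g x -> f x = x *m A.

(** A finite polyptych lattice of rank r over F, with index set the finite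
    type I, transition maps mu a b : M_a -> M_b (given through their R-extensions). *)
Definition polyptych {I : finType} (F : {pred R})
  (mu : I -> I -> 'rV[R]_r -> 'rV[R]_r) : Prop :=
  [/\ forall a b, piecewise_Flinear F (mu a b),
      forall a x, mu a a x = x,
      forall a b x, mu b a (mu a b x) = x
    & forall a b c x, mu b c (mu a b x) = mu a c x].

Section Lattice.
Variables (I : finType) (mu : I -> I -> 'rV[R]_r -> 'rV[R]_r).

(** An element of M_R: an equivalence class, represented by its family of
    representatives, one per chart: pi_a(m) = m a. *)
Definition MRelt (m : I -> 'rV[R]_r) : Prop := forall a b, m b = mu a b (m a).
Definition Melt (F : {pred R}) (m : I -> 'rV[R]_r) : Prop :=
  MRelt m /\ forall a, Fpoint F (m a).

Definition pinv (a : I) (v : 'rV[R]_r) : I -> 'rV[R]_r := fun b => mu a b v.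
Definition addc (a : I) (m m' : I -> 'rV[R]_r) := pinv a (m a + m' a).
Definition scalc (a : I) (lam : R) (m : I -> 'rV[R]_r) := pinv a (lam *: m a).

(** Points of M_R: p(m)+p(m') = min_a p(m +_a m'), p(lam m) = lam p(m), lam >= 0. *)
Definition pointR (p : (I -> 'rV[R]_r) -> R) : Prop :=
  (forall m m', MRelt m -> MRelt m' ->
     (forall a, p m + p m' <= p (addc a m m')) /\
     (exists a, p (addc a m m') = p m + p m')) /\
  (forall lam m, 0 <= lam -> MRelt m -> forall a, p (scalc a lam m) = lam * p m).

Definition pointF (F : {pred R}) (p : (I -> 'rV[R]_r) -> R) : Prop :=
  (forall m, Melt F m -> p m \in F) /\
  (forall m m', Melt F m -> Melt F m' ->
     (forall a, p m + p m' <= p (addc a m m')) /\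
     (exists a, p (addc a m m') = p m + p m')) /\
  (forall lam m, lam \in F -> 0 <= lam -> Melt F m ->
     forall a, p (scalc a lam m) = lam * p m).

Definition halfspace (p : (I -> 'rV[R]_r) -> R) (c : R) : set (I -> 'rV[R]_r) :=
  [set m | MRelt m /\ c <= p m].

Definition pconvR (S : set (I -> 'rV[R]_r)) : set (I -> 'rV[R]_r) :=
  [set m | MRelt m /\ forall p c, pointR p -> S `<=` halfspace p c -> halfspace p c m].

(** Compactness for the topology on M_R induced by the charts
    (each chart pi_a is a homeomorphism onto R^r). *)
Definition MRcompact (S : set (I -> 'rV[R]_r)) : Prop :=
  forall a, compact ((fun m => m a) @` S).

(** PL polytope over F: compact, and an intersection of finitely many
    H_{p_i,a_i} with p_i in Sp(M), a_i in F; q_i is the (unique) extension of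
    p_i to a point of M_R, used to evaluate p_i on M_R. *)
Definition PLpolytope (F : {pred R}) (P : set (I -> 'rV[R]_r)) : Prop :=
  MRcompact P /\
  exists (l : nat) (p q : 'I_l -> (I -> 'rV[R]_r) -> R) (c : 'I_l -> R),
    (forall i, pointF F (p i) /\ pointR (q i) /\
               (forall m, Melt F m -> q i m = p i m) /\ c i \in F) /\
    P = [set m | MRelt m /\ forall i, halfspace (q i) (c i) m].

(** Vertex of a classical polytope Q ⊆ R^r: a 0-dimensional face, i.e. the
    unique minimizer over Q of some linear functional. *)
Definition is_vertex (Q : set 'rV[R]_r) (v : 'rV[R]_r) : Prop :=
  Q v /\ exists u : 'rV[R]_r, forall x, Q x -> x <> v -> dotv u v < dotv u x.

Definition vertices (P : set (I -> 'rV[R]_r)) : set (I -> 'rV[R]_r) :=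
  [set m | MRelt m /\ exists a, is_vertex ((fun m' => m' a) @` P) (m a)].

End Lattice.
End PolyptychDefs.

(* Main.v *)
Require Import Defs.
From HB Require Import structures.
From mathcomp Require Import all_boot all_order all_algebra.
From mathcomp Require Import all_classical all_reals all_analysis.
From mathcomp Require Import ring lra.
Import Order.TTheory GRing.Theory Num.Theory.
Import numFieldNormedType.Exports.
Local Open Scope classical_set_scope.
Local Open Scope ring_scope.
Set Implicit Arguments. Unset Strict Implicit. Unset Printing Implicit Defensive.

Section Vec.
Variables (R : realType) (r : nat).
Implicit Types (u v w : 'rV[R]_r).

Lemma dotvDr u v w : dotv u (v + w) = dotv u v + dotv u w.
Proof. by rewrite /dotv -big_split; apply: eq_bigr => j _; rewrite mxE mulrDr. Qed.
Lemma dotvC u v : dotv u v = dotv v u.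
Proof. by rewrite /dotv; apply: eq_bigr => j _; rewrite mulrC. Qed.
Lemma dotvDl u v w : dotv (v + w) u = dotv v u + dotv w u.
Proof. by rewrite dotvC dotvDr !(dotvC u). Qed.
Lemma dotvZr u k v : dotv u (k *: v) = k * dotv u v.
Proof. by rewrite /dotv mulr_sumr; apply: eq_bigr => j _; rewrite mxE mulrCA. Qed.
Lemma dotvZl u k v : dotv (k *: v) u = k * dotv v u.
Proof. by rewrite dotvC dotvZr dotvC. Qed.
Lemma dotvNr u v : dotv u (- v) = - dotv u v.
Proof. by rewrite -scaleN1r dotvZr mulN1r. Qed.
Lemma dotvNl u v : dotv (- v) u = - dotv v u.
Proof. by rewrite -scaleN1r dotvZl mulN1r. Qed.
Lemma dotv_ge0 v : 0 <= dotv v v.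
Proof. by rewrite /dotv sumr_ge0 // => j _; rewrite -expr2 sqr_ge0. Qed.
Lemma dotv_eq0 v : dotv v v = 0 -> v = 0.
Proof.
move=> /eqP; rewrite /dotv psumr_eq0 => [/allP H|j _]; last by rewrite -expr2 sqr_ge0.
apply/rowP => j; rewrite mxE; have /implyP := H j (mem_index_enum j).
by move=> /(_ isT); rewrite mulf_eq0 orbb => /eqP.
Qed.
Lemma dotv_gt0 v : v <> 0 -> 0 < dotv v v.
Proof. by move=> vn0; rewrite lt_neqAle dotv_ge0 andbT; apply/eqP => /esym/dotv_eq0. Qed.

Lemma cont_sum (s : seq 'I_r) (g : 'I_r -> 'rV[R]_r -> R) :
  (forall j, continuous (g j)) -> continuous (fun y => \sum_(j <- s) g j y).
Proof.
move=> gc; elim: s => [|j s IH].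
  by under eq_fun do rewrite big_nil; exact: cst_continuous.
under eq_fun do rewrite big_cons.
by move=> x; apply: continuousD; [exact: gc|exact: IH].
Qed.

Lemma dotv_cont u : continuous (fun y => dotv u y).
Proof.
rewrite /dotv; apply: cont_sum => j x; apply: continuousM.
  exact: cst_continuous.
exact: coord_continuous.
Qed.

Lemma subc_cont (z : 'rV[R]_r) : continuous (fun y : 'rV[R]_r => y - z).
Proof. move=> x; apply: continuousB => //; exact: cst_continuous. Qed.

Lemma coordB_cont (z : 'rV[R]_r) j : continuous (fun y : 'rV[R]_r => (y - z) 0 j).
Proof.
move=> x; apply: (@continuous_comp _ _ _ (fun y : 'rV[R]_r => y - z) (fun y : 'rV[R]_r => y 0 j)).
  exact: subc_cont.
exact: coord_continuous.
Qed.

Lemma sq_cont (z : 'rV[R]_r) : continuous (fun y : 'rV[R]_r => dotv (y - z) (y - z)).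
Proof.
rewrite /dotv; apply: cont_sum => j x; apply: continuousM; exact: coordB_cont.
Qed.

End Vec.


Section Conc.
Variables (R : realType) (r : nat) (f : 'rV[R]_r -> R).
Hypothesis fsup : forall x y, f x + f y <= f (x + y).
Hypothesis fhom : forall l x, 0 <= l -> f (l *: x) = l * f x.

Definition l1 (v : 'rV[R]_r) := \sum_j `|v 0 j|.

Lemma f0 : f 0 = 0.
Proof. by have := @fhom 0 0 (lexx 0); rewrite scale0r mul0r; apply. Qed.

Lemma fsum (s : seq 'I_r) (g : 'I_r -> 'rV[R]_r) :
  \sum_(j <- s) f (g j) <= f (\sum_(j <- s) g j).
Proof.
elim: s => [|j s IH]; first by rewrite !big_nil f0.
rewrite !big_cons; apply: le_trans (fsup _ _); by rewrite lerD2l.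
Qed.

Lemma flow : exists M, 0 <= M /\ forall v, - (M * l1 v) <= f v.
Proof.
pose M := \sum_(j < r) (`|f 'e_j| + `|f (- 'e_j)|).
exists M; split; first by rewrite sumr_ge0 // => j _; rewrite addr_ge0.
move=> v; rewrite [X in f X]row_sum_delta; apply: le_trans (fsum _ _).
rewrite /l1 mulr_sumr -sumrN; apply: ler_sum => j _.
have hM : `|f 'e_j| + `|f (- 'e_j)| <= M.
  by rewrite /M (bigD1 j) //= lerDl sumr_ge0 // => i _; rewrite addr_ge0.
have h1 := ler_norm (f 'e_j); have h1' := ler_norm (- f 'e_j).
have h2 := ler_norm (- f (- 'e_j)); rewrite normrN in h1'.
rewrite (normrN (f (- 'e_j))) in h2.
have n1 := normr_ge0 (f 'e_j); have n2 := normr_ge0 (f (- 'e_j)).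
have [vp|vn] := leP 0 (v 0 j).
  rewrite fhom // ger0_norm //.
  nra.
have -> : v 0 j *: ('e_j : 'rV[R]_r) = (- v 0 j) *: (- ('e_j : 'rV[R]_r)) by rewrite scalerN scaleNr opprK.
rewrite fhom; last by rewrite oppr_ge0 ltW.
rewrite ltr0_norm //.
have : 0 <= (- v 0 j) * (f (- 'e_j) + M).
  apply: mulr_ge0; first by rewrite oppr_ge0 ltW.
  lra.
lra.
Qed.

Lemma l1N v : l1 (- v) = l1 v.
Proof. by rewrite /l1; apply: eq_bigr => j _; rewrite mxE normrN. Qed.
Lemma l10 : l1 0 = 0.
Proof. by rewrite /l1 big1 // => j _; rewrite mxE normr0. Qed.

Lemma l1_cont (z : 'rV[R]_r) : continuous (fun y : 'rV[R]_r => l1 (y - z)).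
Proof.
rewrite /l1; apply: cont_sum => j x.
apply: (@continuous_comp _ _ _ (fun y : 'rV[R]_r => (y - z) 0 j) (fun t : R => `|t|)).
  exact: coordB_cont.
exact: norm_continuous.
Qed.

Lemma f_cont : continuous f.
Proof.
have [M [M0 HM]] := flow.
have lip : forall x y, f x - M * l1 (y - x) <= f y.
  move=> x y; have h := fsup x (y - x); rewrite [x + _]addrC subrK in h.
  have := HM (y - x); lra.
move=> x.
have c1 : (fun y : 'rV[R]_r => f x - M * l1 (y - x)) @ x --> f x.
  have : continuous (fun y : 'rV[R]_r => f x - M * l1 (y - x)).
    move=> y; apply: (@continuousB _ _ _ (fun=> f x) (fun y : 'rV[R]_r => M * l1 (y - x))); first exact: cst_continuous.
    apply: (@continuousM _ _ (fun=> M) (fun y : 'rV[R]_r => l1 (y - x))); first exact: cst_continuous.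
    exact: l1_cont.
  by move=> /(_ x); rewrite /continuous_at subrr l10 mulr0 subr0.
have c2 : (fun y : 'rV[R]_r => f x + M * l1 (y - x)) @ x --> f x.
  have : continuous (fun y : 'rV[R]_r => f x + M * l1 (y - x)).
    move=> y; apply: (@continuousD _ _ _ (fun=> f x) (fun y : 'rV[R]_r => M * l1 (y - x))); first exact: cst_continuous.
    apply: (@continuousM _ _ (fun=> M) (fun y : 'rV[R]_r => l1 (y - x))); first exact: cst_continuous.
    exact: l1_cont.
  by move=> /(_ x); rewrite /continuous_at subrr l10 mulr0 addr0.
apply: (squeeze_cvgr _ c1 c2); apply: nearW => y.
apply/andP; split; first exact: lip.
have := lip y x; rewrite -(opprB y x) l1N; lra.
Qed.

End Conc.


Section Core.
Variables (R : realType) (r : nat) (f : 'rV[R]_r -> R).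
Hypothesis fsup : forall x y, f x + f y <= f (x + y).
Hypothesis fhom : forall l x, 0 <= l -> f (l *: x) = l * f x.
Variable (K : set 'rV[R]_r).
Hypothesis Kc : compact K.
Hypothesis Kconv : forall x y t, K x -> K y -> 0 <= t <= 1 -> K ((1 - t) *: x + t *: y).

Local Notation sq v := (dotv v v).

Lemma sqD (a b : 'rV[R]_r) : sq (a + b) = sq a + 2 * dotv a b + sq b.
Proof. rewrite !(dotvDr, dotvDl) (dotvC b a); ring. Qed.
Lemma sqZ k (a : 'rV[R]_r) : sq (k *: a) = k ^+ 2 * sq a.
Proof. rewrite dotvZr dotvZl; ring. Qed.
Lemma sqN (a : 'rV[R]_r) : sq (- a) = sq a.
Proof. by rewrite dotvNr dotvNl opprK. Qed.

Lemma far (z : 'rV[R]_r) : K !=set0 ->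
  exists2 y, K y & is_vertex K y /\ forall w, K w -> sq (w - z) <= sq (y - z).
Proof.
move=> K0.
have cz : {within K, continuous (fun y : 'rV[R]_r => sq (y - z))}.
  by apply: continuous_subspaceT; exact: sq_cont.
have [y /set_mem Ky Hy] := compact_EVT_max K0 Kc cz.
have Hy' : forall w, K w -> sq (w - z) <= sq (y - z).
  by move=> w Kw; apply: Hy; apply: mem_set.
exists y => //; split => //; split => //; exists (z - y) => w Kw wy.
have H := Hy' w Kw.
have wy0 : w - y <> 0 by move=> /eqP; rewrite subr_eq0 => /eqP.
have pos := dotv_gt0 wy0.
have E : w - z = (w - y) + (y - z) by rewrite addrA subrK.
rewrite E sqD in H.
rewrite !(dotvDr, dotvDl, dotvNr, dotvNl) in H pos *.
have := dotvC w y; have := dotvC z y; have := dotvC w z; lra.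
Qed.

Lemma fconc x y t : 0 <= t <= 1 -> (1 - t) * f x + t * f y <= f ((1 - t) *: x + t *: y).
Proof.
move=> /andP[t0 t1]; rewrite -(fhom x) ?subr_ge0 // -(fhom y) //; exact: fsup.
Qed.

Lemma core (c : R) x0 : K x0 -> (forall y, is_vertex K y -> c <= f y) -> c <= f x0.
Proof.
move=> Kx0 Hv; rewrite leNgt; apply/negP => fx0.
have fc := f_cont fsup fhom.
pose C := K `&` [set y | c <= f y].
have Cc : compact C.
  apply: compact_closedI Kc _.
  have : closed (f @^-1` [set t | c <= t]).
    by apply: preimage_closed; [move=> t _; exact: fc|exact: closed_ge].
  by [].
have K0 : K !=set0 by exists x0.
have [y1 Ky1 [V1 _]] := far x0 K0.
have C0 : C !=set0 by exists y1; split => //; exact: Hv.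
have cn : {within C, continuous (fun y : 'rV[R]_r => - sq (y - x0))}.
  apply: continuous_subspaceT => y; apply: (@continuousN _ _ _ (fun y : 'rV[R]_r => sq (y - x0))); exact: sq_cont.
have [ys /set_mem [Kys /= cys] Hys] := compact_EVT_max C0 Cc cn.
have Hys' : forall y, C y -> sq (ys - x0) <= sq (y - x0).
  by move=> y Cy; have := Hys y (mem_set Cy); rewrite lerN2.
pose u := x0 - ys.
have proj : forall y, C y -> dotv u (y - ys) <= 0.
  move=> y [Ky /= cy]; rewrite leNgt; apply/negP => a0.
  set a := dotv u (y - ys) in a0.
  set s := sq (y - ys).
  have s0 : 0 <= s by apply: dotv_ge0.
  have as0 : 0 < a + s by lra.
  pose t := a / (a + s).
  have ht : t * (a + s) = a by rewrite /t divfK // gt_eqF.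
  have t0 : 0 < t by rewrite /t divr_gt0.
  have t1 : t <= 1 by rewrite /t ler_pdivrMr // mul1r lerDl.
  pose w := (1 - t) *: ys + t *: y.
  have Cw : C w.
    split; first by apply: Kconv => //; rewrite ltW.
    have := fconc ys y (t := t); rewrite (ltW t0) t1 => /(_ isT) h.
    have h1 : 0 <= (1 - t) * (f ys - c) by apply: mulr_ge0; lra.
    have h2 : 0 <= t * (f y - c) by apply: mulr_ge0; lra.
    rewrite /=; lra.
  have := Hys' w Cw.
  have E : w - x0 = (ys - x0) + t *: (y - ys).
    by apply/rowP => j; rewrite !mxE; ring.
  have E2 : ys - x0 = - u by rewrite opprB.
  rewrite E (sqD (ys - x0)) sqZ dotvZr E2 !sqN dotvNl -/a -/s.
  nra.
have u0 : u <> 0.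
  move=> /eqP; rewrite subr_eq0 => /eqP ex; move: fx0; rewrite ex; lra.
set s := sq u.
have s0 : 0 < s by apply: dotv_gt0.
have cD : {within K, continuous (fun y : 'rV[R]_r => sq (y - x0))}.
  by apply: continuous_subspaceT; exact: sq_cont.
have [yD /set_mem KyD HD] := compact_EVT_max K0 Kc cD.
set D := sq (yD - x0) in HD.
have D0 : 0 <= D by apply: dotv_ge0.
pose T := D / s + 1.
have hT : T * s = D + s by rewrite /T mulrDl divfK ?mul1r // gt_eqF.
have T0 : 0 < T by rewrite /T ltr_wpDl // divr_ge0 // ltW.
pose z := x0 - T *: u.
have [y Ky [Vy Hy]] := far z K0.
have Cy : C y by split => //; exact: Hv.
have b0 := proj y Cy.
have h := Hy x0 Kx0.
have hd : sq (y - x0) <= D by apply: HD; apply: mem_set.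
have E1 : x0 - z = T *: u by apply/rowP => j; rewrite !mxE; ring.
have E2 : y - z = (y - ys) + (T - 1) *: u.
  by apply/rowP => j; rewrite !mxE; ring.
have E3 : y - x0 = (y - ys) + - u.
  by apply/rowP => j; rewrite !mxE; ring.
rewrite E1 E2 sqD !sqZ dotvZr (dotvC _ u) in h.
rewrite E3 sqD sqN dotvNr (dotvC _ u) in hd.
set b := dotv u (y - ys) in b0 h hd.
have Tb : T * b <= 0 by rewrite mulr_ge0_le0 // ltW.
rewrite -/s in h hd. nra.
Qed.

End Core.


Section Chart.
Variables (R : realType) (r : nat) (I : finType) (mu : I -> I -> 'rV[R]_r -> 'rV[R]_r).
Hypothesis Hid : forall a x, mu a a x = x.
Hypothesis Hco : forall a b c x, mu b c (mu a b x) = mu a c x.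

Lemma MRelt_pinv a x : MRelt mu (Defs.pinv mu a x).
Proof. by move=> b c; rewrite /Defs.pinv Hco. Qed.

Lemma pinvK a m : MRelt mu m -> Defs.pinv mu a (m a) = m.
Proof. by move=> H; apply/funext => b; rewrite /Defs.pinv -H. Qed.

Lemma pinv_at a x : Defs.pinv mu a x a = x.
Proof. exact: Hid. Qed.

Variable (p : (I -> 'rV[R]_r) -> R).
Hypothesis Hp : pointR mu p.

Lemma gsup a x y : p (Defs.pinv mu a x) + p (Defs.pinv mu a y) <= p (Defs.pinv mu a (x + y)).
Proof.
have [H1 _] := Hp.
have := (H1 _ _ (MRelt_pinv a x) (MRelt_pinv a y)).1 a.
by rewrite /addc !pinv_at.
Qed.

Lemma ghom a l x : 0 <= l -> p (Defs.pinv mu a (l *: x)) = l * p (Defs.pinv mu a x).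
Proof.
move=> l0; have [_ H2] := Hp.
by have := H2 l _ l0 (MRelt_pinv a x) a; rewrite /scalc pinv_at.
Qed.

End Chart.

Unset Implicit Arguments.

Theorem mainTheorem10 (R : realType) (F : {pred R}) (HF : is_subring F)
  (r : nat) (I : finType) (HI : (0 < #|I|)%N)
  (mu : I -> I -> 'rV[R]_r -> 'rV[R]_r) (Hmu : polyptych F mu)
  (P : set (I -> 'rV[R]_r)) (HP : PLpolytope mu F P) :
  P = pconvR mu (vertices mu P).
Proof.
case: Hmu => _ Hid _ Hco.
case: HP => Kc [l [p [q [c [Hq HPe]]]]].
have /card_gt0P [a0 _] := HI.
have Pm : forall m, P m <-> MRelt mu m /\ (forall i, halfspace mu (q i) (c i) m).
  by move=> m; rewrite HPe.
apply/seteqP; split.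
- move=> m Pm0; have [Mm _] := (Pm m).1 Pm0.
  split => // p0 c0 Hp0 HV; split => //.
  have Kconv : forall x y t, ((fun m => m a0) @` P) x -> ((fun m => m a0) @` P) y ->
      0 <= t <= 1 -> ((fun m => m a0) @` P) ((1 - t) *: x + t *: y).
    move=> x y t [mx Pmx <-] [my Pmy <-] ht.
    exists (Defs.pinv mu a0 ((1 - t) *: mx a0 + t *: my a0)); last exact: pinv_at.
    apply/Pm; split; first exact: MRelt_pinv.
    move=> i; split; first exact: MRelt_pinv.
    have [_ [Hqi _]] := Hq i.
    have := fconc (gsup Hid Hco Hqi a0) (ghom Hid Hco Hqi a0) (mx a0) (my a0) ht.
    have [Mmx Hmx] := (Pm mx).1 Pmx; have [Mmy Hmy] := (Pm my).1 Pmy.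
    rewrite !pinvK //.
    have [_ cx] := Hmx i; have [_ cy] := Hmy i.
    move: ht => /andP[t0 t1].
    have h1 : 0 <= (1 - t) * (q i mx - c i) by apply: mulr_ge0; lra.
    have h2 : 0 <= t * (q i my - c i) by apply: mulr_ge0; lra.
    lra.
  have := core (gsup Hid Hco Hp0 a0) (ghom Hid Hco Hp0 a0) (Kc a0) Kconv (c := c0)
    (x0 := m a0).
  rewrite pinvK //; apply; first by exists m.
  move=> y Vy.
  have : vertices mu P (Defs.pinv mu a0 y).
    split; first exact: MRelt_pinv.
    by exists a0; rewrite pinv_at.
  by move=> /HV [].
- move=> m [Mm Hm]; apply/Pm; split => // i.
  apply: Hm; first exact: (Hq i).2.1.
  move=> v [Mv [a [[m' Pm' e] _]]].
  have [Mm' Hm'] := (Pm m').1 Pm'.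
  have -> : v = m' by rewrite -(pinvK a Mv) -e pinvK.
  exact: Hm'.
Qed.
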